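(* Let $\delta\in(0,1)$, let $X\subset\mathbb{R}_+$ be a Borel set with $0\in X$, let $x_0>0$, and let $\mathcal B_X=\{F_{(z,\sigma)}:z\in X,\sigma\in[0,1]\}$. For each decision rule $q=(q_0,q_1,q_2,\dots)$ there exists a stationary decision rule $\bar q$ (i.e. one with $\bar q_0=\bar q_1=\bar q_2=\cdots$) such that $R_{\bar q}(x_0,\mathcal B_X)\ge R_q(x_0,\mathcal B_X)$.
   Context: Binary search setting. A binary environment $F_{(z,\sigma)}$ ($z\in X$, $\sigma\in[0,1]$) generates i.i.d. alternatives $x_1,x_2,\dots$, each equal to $z$ with probability $\sigma$ and to $0$ with probability $1-\sigma$. The individual starts with outside option $x_0>0$; payoffs are discounted by $\delta$, and stopping at round $t$ yields $\delta^t\max\{x_0,\dots,x_t\}$ (never stopping yields $0$). A decision rule for binary environments is a sequence $q=(q_0,q_1,\dots)$ with $q_t\in[0,1]$: after a history in which the first $t$ alternatives all equal $0$ it stops with probability $q_t$, and after any history containing a nonzero alternative it stops with probability $1$. For an environment $F$ and history $h$, $U_q(F,h)$ is the expected discounted payoff from $h$ onward (payoff $\delta^{s-t}y_s$ when stopping at round $s$ after history $h_t$), and $V(F,h)$ is the supremum of such expected payoffs over all decision rules. An environment is consistent with a history $h_t=(x_0,\dots,x_t)$ if $x_1,\dots,x_t$ occurs with positive probability under it; a prior is a finitely supported distribution $\mu$ over $\mathcal B_X$, with $U_q(\mu,h)=\sum_F\mu(F\mid h)U_q(F,h)$ ($\mu(\cdot\mid h)$ the Bayesian posterior) and $V(\mu,h)=\sup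 U(\mu,h)$. The performance ratio is $R_q(x_0,\mathcal B_X)=\inf_h\inf_\mu U_q(\mu,h)/V(\mu,h)$, the infima over histories starting with $x_0$ and priors over $\mathcal B_X$ consistent with them. *)

(* Defs.v *)
From HB Require Import structures.
From mathcomp Require Import all_boot all_order all_algebra.
From mathcomp Require Import all_classical all_reals all_analysis.
Set Implicit Arguments. Unset Strict Implicit. Unset Printing Implicit Defensive.
Import Order.TTheory GRing.Theory Num.Theory.
Import numFieldNormedType.Exports.
Local Open Scope classical_set_scope.
Local Open Scope ring_scope.

Section BinarySearch.
Variable R : realType.

(* A binary environment F_(z,sigma) is encoded by the pair (z, sigma). *)
Definition env := (R * R)%type.

Definition in_BX (X : set R) (F : env) : Prop :=
  X F.1 /\ 0 <= F.2 <= 1.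

Definition alt_prob (F : env) (x : R) : R :=
  (if x == F.1 then F.2 else 0) + (if x == 0 then 1 - F.2 else 0).

(* A history h_t = (x0, x1, ..., xt) is represented by x0 and the list
   xs = [:: x1; ...; xt] of realised alternatives.
   Probability under F of the alternatives x1..xt. *)
Definition hist_prob (F : env) (xs : seq R) : R :=
  \prod_(x <- xs) alt_prob F x.

Definition consistent (F : env) (xs : seq R) : Prop := 0 < hist_prob F xs.

Definition decision_rule (q : nat -> R) : Prop := forall t, 0 <= q t <= 1.

Definition stationary (q : nat -> R) : Prop := forall t, q t = q 0%N.

Definition hmax (x0 : R) (xs : seq R) : R := \big[Num.max/x0]_(x <- xs) x.

(* Expected discounted payoff U_q(F,h) from the history (x0, xs) onward
   (payoff delta^(s-t) y_s when stopping at round s >= t = size xs).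
   If a nonzero alternative has occurred, q stops at once.  Otherwise, with
   y = max h, sigma' the probability of a nonzero alternative under F, and
   a_k = prod_(j<k) (1 - q_(t+j)) (1 - sigma') the probability of reaching
   round t+k without stopping (all new alternatives 0), the payoff is the sum
   over k of
     delta^k a_k q_(t+k) y                               (stop by q at t+k)
   + delta^(k+1) a_k (1 - q_(t+k)) sigma' max(y, z)      (nonzero alt. at t+k+1).
   Never stopping yields 0. *)
Definition U_env (delta : R) (q : nat -> R) (F : env) (x0 : R) (xs : seq R) : R :=
  let y := hmax x0 xs in
  let t := size xs in
  if all (fun x => x == 0) xs then
    let s' := if F.1 == 0 then 0 else F.2 in
    let a := fun k : nat => \prod_(j < k) ((1 - q (t + j)%N) * (1 - s')) in
    limn (series ((fun k : nat =>
        delta ^+ k * a k * q (t + k)%N * y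
      + delta ^+ k.+1 * a k * (1 - q (t + k)%N) * s' * Num.max y F.1) : R^nat))
  else y.

(* A finitely supported prior over B_X: a finite list of (environment, weight)
   pairs with nonnegative weights summing to 1. *)
Definition prior (X : set R) (mu : seq (env * R)) : Prop :=
  (forall e, e \in mu -> in_BX X e.1 /\ 0 <= e.2) /\
  \sum_(e <- mu) e.2 = 1.

Definition post_norm (mu : seq (env * R)) (xs : seq R) : R :=
  \sum_(e <- mu) e.2 * hist_prob e.1 xs.

Definition prior_consistent (mu : seq (env * R)) (xs : seq R) : Prop :=
  0 < post_norm mu xs.

Definition U_prior (delta : R) (q : nat -> R) (mu : seq (env * R))
    (x0 : R) (xs : seq R) : R :=
  (\sum_(e <- mu) e.2 * hist_prob e.1 xs * U_env delta q e.1 x0 xs)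
    / post_norm mu xs.

Definition V_prior (delta : R) (mu : seq (env * R)) (x0 : R) (xs : seq R) : R :=
  sup [set U_prior delta q mu x0 xs | q in decision_rule].

Definition perf_ratio (delta : R) (X : set R) (x0 : R) (q : nat -> R) : R :=
  inf [set r : R | exists (mu : seq (env * R)) (xs : seq R),
          [/\ prior X mu, prior_consistent mu xs &
               r = U_prior delta q mu x0 xs / V_prior delta mu x0 xs]].

End BinarySearch.

(* Main.v *)
Require Import Defs.
From HB Require Import structures.
From mathcomp Require Import all_boot all_order all_algebra.
From mathcomp Require Import all_classical all_reals all_analysis.
From mathcomp Require Import ring lra.
Import Order.TTheory GRing.Theory Num.Theory.
Import numFieldNormedType.Exports.
Local Open Scope classical_set_scope.
Local Open Scope ring_scope.

Definition Sterm {R : realType} (a : R) (b : nat -> R) (k : nat) : R :=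
  a ^+ k * \prod_(j < k.+1) b j.
Definition Sser {R : realType} (a : R) (b : nat -> R) : R := limn (series (Sterm a b)).

Definition unitb {R : realType} (b : nat -> R) := forall j, 0 <= b j <= 1.

Lemma geo_bound {R : realType} (a : R) n : 0 <= a < 1 ->
  \sum_(k < n) a ^+ k <= (1 - a)^-1.
Proof.
move=> /andP[a0 a1].
have h : (\sum_(k < n) a ^+ k) * (1 - a) = 1 - a ^+ n.
  elim: n => [|n IH]; first by rewrite big_ord0 expr0 mul0r subrr.
  by rewrite big_ord_recr /= mulrDl IH exprSr; ring.
have ha : 0 < 1 - a by rewrite subr_gt0.
have hne : 1 - a != 0 by rewrite gt_eqF.
rewrite -(@ler_pM2r _ (1 - a)) // h mulVf //.
by rewrite lerBlDr lerDl exprn_ge0.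
Qed.

Lemma Sterm_ge0 {R : realType} (a : R) b k : 0 <= a -> unitb b -> 0 <= Sterm a b k.
Proof.
move=> a0 hb; rewrite /Sterm mulr_ge0 ?exprn_ge0 //.
by apply: prodr_ge0 => j _; case/andP: (hb j).
Qed.

Lemma Sterm_le {R : realType} (a : R) b k : 0 <= a -> unitb b -> Sterm a b k <= a ^+ k.
Proof.
move=> a0 hb; rewrite /Sterm -[leRHS]mulr1 ler_wpM2l ?exprn_ge0 //.
apply: prodr_ile1 => j _; exact: hb.
Qed.

Lemma Sser_cvg {R : realType} (a : R) b : 0 <= a < 1 -> unitb b ->
  cvgn (series (Sterm a b)).
Proof.
move=> ha hb; case/andP: (ha) => a0 a1.
apply: nondecreasing_is_cvgn.
  apply/nondecreasing_seqP => n; rewrite seriesSr lerDl; exact: Sterm_ge0.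
exists (1 - a)^-1 => _ [n _ <-]; rewrite seriesEord /=.
apply: (@le_trans _ _ (\sum_(k < n) a ^+ k)); first by apply: ler_sum => i _; exact: Sterm_le.
exact: geo_bound.
Qed.

Lemma Sser_bounds {R : realType} (a : R) b : 0 <= a < 1 -> unitb b ->
  0 <= Sser a b <= (1 - a)^-1.
Proof.
move=> ha hb; case/andP: (ha) => a0 a1; apply/andP; split.
  apply: limr_ge; first exact: Sser_cvg.
  by apply: nearW => n; rewrite seriesEord /=; apply: sumr_ge0 => i _; exact: Sterm_ge0.
apply: limr_le; first exact: Sser_cvg.
apply: nearW => n; rewrite seriesEord /=.
apply: (@le_trans _ _ (\sum_(k < n) a ^+ k)); first by apply: ler_sum => i _; exact: Sterm_le.
exact: geo_bound.
Qed.

Lemma series_Sterm_S {R : realType} (a : R) b n :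
  series (Sterm a b) n.+1 = b 0%N * (1 + a * series (Sterm a (fun j => b j.+1)) n).
Proof.
rewrite !seriesEord /= big_ord_recl /= /Sterm expr0 mul1r big_ord1.
rewrite mulrDr mulr1 mulr_sumr mulr_sumr; congr (_ + _); apply: eq_bigr => i _.
rewrite /bump /= big_ord_recl /= exprS; ring.
Qed.

Lemma Sser_rec {R : realType} (a : R) b : 0 <= a < 1 -> unitb b ->
  Sser a b = b 0%N * (1 + a * Sser a (fun j => b j.+1)).
Proof.
move=> ha hb.
have hb' : unitb (fun j => b j.+1) by move=> j; exact: hb.
have Hv := @Sser_cvg _ a _ ha hb'.
have H : (fun n => b 0%N * (1 + a * series (Sterm a (fun j => b j.+1)) n)) @ \oo -->
   b 0%N * (1 + a * Sser a (fun j => b j.+1)).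
  apply: cvgM; first exact: cvg_cst.
  apply: cvgD; first exact: cvg_cst.
  apply: cvgM; first exact: cvg_cst.
  exact: Hv.
rewrite /Sser; apply: cvg_lim => //.
rewrite -cvg_shiftS; apply: (cvg_trans _ H).
apply: near_eq_cvg; apply: nearW => n /=; by rewrite series_Sterm_S.
Qed.

Lemma Sser_const {R : realType} (a g : R) : 0 <= a < 1 -> 0 <= g <= 1 ->
  Sser a (fun _ => g) = g / (1 - a * g).
Proof.
move=> ha hg; have hb : unitb (fun _ : nat => g) by [].
have := @Sser_rec _ a _ ha hb => /= h.
case/andP: ha => a0 a1; case/andP: hg => g0 g1.
have hpos : 0 < 1 - a * g.
  rewrite subr_gt0; apply: (le_lt_trans _ a1); rewrite -[leRHS]mulr1 ler_wpM2l //.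
have hne : 1 - a * g != 0 by rewrite gt_eqF.
apply: (mulIf hne); rewrite mulfVK //.
set S := Sser a (fun _ => g) in h *.
have h' : S = g * (1 + a * S) by exact: h.
transitivity (S - a * g * S); first ring.
rewrite {1}h'; ring.
Qed.

Definition wseq {R : realType} (A : R) (b : nat -> R) (k : nat) : R :=
  A ^+ k * \prod_(j < k) b j.

Lemma wseqS {R : realType} (A : R) b k : wseq A b k.+1 = A * Sterm A b k.
Proof. by rewrite /wseq /Sterm exprS mulrA. Qed.

Lemma Sterm_w {R : realType} (A : R) b k : Sterm A b k = wseq A b k * b k.
Proof. by rewrite /wseq /Sterm big_ord_recr /= mulrA. Qed.

Lemma useries_cvg {R : realType} (A y kap : R) b : 0 <= A < 1 -> unitb b ->
  series (fun k => y * (wseq A b k - wseq A b k.+1) + kap * Sterm A b k) @ \oo -->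
  y + kap * Sser A b.
Proof.
move=> hA hb; case/andP: (hA) => A0 A1.
have E : forall n, series (fun k => y * (wseq A b k - wseq A b k.+1) + kap * Sterm A b k) n
   = y * (1 - wseq A b n) + kap * series (Sterm A b) n.
  elim=> [|n IH]; first by rewrite /series /= !big_geq // /wseq expr0 big_ord0; ring.
  by rewrite !seriesSr IH; ring.
have Hw : wseq A b @ \oo --> 0.
  apply: (@squeeze_cvgr _ _ _ _ (cst 0) (GRing.exp A)); last 2 first.
  - exact: cvg_cst.
  - by apply: cvg_expr; rewrite ger0_norm.
  apply: nearW => n /=; apply/andP; split.
    rewrite /wseq mulr_ge0 ?exprn_ge0 //; apply: prodr_ge0 => j _; by case/andP: (hb j).
  rewrite /wseq -[leRHS]mulr1 ler_wpM2l ?exprn_ge0 //; apply: prodr_ile1 => j _; exact: hb.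
have -> : y + kap * Sser A b = y * (1 - 0) + kap * Sser A b by rewrite subr0 mulr1.
apply: (cvg_trans (G := (fun n => y * (1 - wseq A b n) + kap * series (Sterm A b) n) @ \oo)); last first.
  apply: cvgD; first (apply: cvgM; [exact: cvg_cst | apply: cvgB; [exact: cvg_cst | exact: Hw]]).
  apply: cvgM; first exact: cvg_cst.
  exact: (@Sser_cvg _ A b hA hb).
apply: near_eq_cvg; apply: nearW => n /=; by rewrite E.
Qed.

Definition sp {R : realType} (F : env R) : R := if F.1 == 0 then 0 else F.2.
Definition Aof {R : realType} (d : R) (F : env R) : R := d * (1 - sp F).
Definition Mof {R : realType} (x0 : R) (F : env R) : R := Num.max x0 F.1.
Definition kapof {R : realType} (d x0 : R) (F : env R) : R :=
  Aof d F * x0 + d * sp F * Mof x0 F - x0.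
Definition bq {R : realType} (q : nat -> R) (t : nat) : nat -> R := fun j => 1 - q (t + j)%N.

Lemma sp_bounds {R : realType} (F : env R) : 0 <= F.2 <= 1 -> 0 <= sp F <= 1.
Proof. by rewrite /sp; case: ifP => // _; rewrite lexx ler01. Qed.

Lemma Aof_bounds {R : realType} (d : R) F : 0 <= d < 1 -> 0 <= F.2 <= 1 -> 0 <= Aof d F < 1.
Proof.
move=> /andP[d0 d1] /sp_bounds /andP[s0 s1]; rewrite /Aof; apply/andP; split.
  by rewrite mulr_ge0 // subr_ge0.
apply: (le_lt_trans _ d1); rewrite -[leRHS]mulr1 ler_wpM2l // lerBlDr lerDl //.
Qed.

Lemma bq_unit {R : realType} (q : nat -> R) t : decision_rule q -> unitb (bq q t).
Proof.
move=> hq j; rewrite /bq; case/andP: (hq (t + j)%N) => h0 h1.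
by rewrite subr_ge0 h1 lerBlDr lerDl h0.
Qed.

Lemma hmax_zero {R : realType} (x0 : R) xs : 0 <= x0 -> all (fun x => x == 0) xs ->
  hmax x0 xs = x0.
Proof.
move=> hx; elim: xs => [|x xs IH] /=; first by rewrite /hmax big_nil.
case/andP => /eqP -> /IH; rewrite /hmax big_cons => ->.
by rewrite /Num.max; case: ifP => // /negbT; rewrite -leNgt => h; apply/le_anti; rewrite hx h.
Qed.

Lemma prod_split_const {R : realType} (f : nat -> R) (c : R) k :
  \prod_(j < k) (f j * c) = c ^+ k * \prod_(j < k) f j.
Proof.
elim: k => [|k IH]; first by rewrite !big_ord0 expr0 mulr1.
by rewrite !big_ord_recr /= IH exprSr; ring.
Qed.

Lemma Uenv_zero {R : realType} (d : R) q (F : env R) x0 xs :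
  0 <= d < 1 -> 0 <= F.2 <= 1 -> decision_rule q -> 0 < x0 ->
  all (fun x => x == 0) xs ->
  U_env d q F x0 xs = x0 + kapof d x0 F * Sser (Aof d F) (bq q (size xs)).
Proof.
move=> hd hF hq hx0 hall.
rewrite /U_env hall hmax_zero ?ltW //.
apply: cvg_lim => //.
set t := size xs.
have -> : (fun k => d ^+ k * \prod_(j < k) ((1 - q (t + j)%N) * (1 - (if F.1 == 0 then 0 else F.2)))
      * q (t + k)%N * x0
      + d ^+ k.+1 * \prod_(j < k) ((1 - q (t + j)%N) * (1 - (if F.1 == 0 then 0 else F.2)))
      * (1 - q (t + k)%N) * (if F.1 == 0 then 0 else F.2) * Num.max x0 F.1)
    = (fun k => x0 * (wseq (Aof d F) (bq q t) k - wseq (Aof d F) (bq q t) k.+1)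
        + kapof d x0 F * Sterm (Aof d F) (bq q t) k).
  apply: funext => k.
  rewrite wseqS Sterm_w /wseq /kapof /Mof /Aof -/(sp F) (prod_split_const (fun j => 1 - q (t + j)%N)) /bq exprMn exprS.
  ring.
apply: useries_cvg; [exact: Aof_bounds | exact: bq_unit].
Qed.

Lemma small_pow {R : realType} (m K e : R) : 0 <= m < 1 -> 0 <= K -> 0 < e ->
  exists n : nat, m ^+ n * K < e.
Proof.
move=> /andP[m0 m1] K0 e0.
have hK : 0 < K + 1 by rewrite ltr_wpDl.
have H := @cvg_expr R m.
have : `|m| < 1 by rewrite ger0_norm.
move=> /H /cvgr_lt /(_ (e / (K + 1))) H2.
have : 0 < e / (K + 1) by rewrite divr_gt0.
move=> /H2 [N _ HN]; exists N.
have := HN N (leqnn N) => /= hN.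
apply: (le_lt_trans (y := m ^+ N * (K + 1))).
  by rewrite ler_wpM2l ?exprn_ge0 // lerDl.
by rewrite -ltr_pdivlMr.
Qed.

Lemma iter_lb {R : realType} (D c : nat -> R) (m K : R) :
  0 <= m < 1 -> 0 <= K ->
  (forall t, 0 <= c t <= m) -> (forall t, c t * D t.+1 <= D t) -> (forall t, - K <= D t) ->
  forall t, 0 <= D t.
Proof.
move=> hm K0 hc hD hK.
have Hn : forall n t, - (m ^+ n * K) <= D t.
  elim=> [|n IH] t; first by rewrite expr0 mul1r.
  apply: (le_trans (y := c t * D t.+1)); last exact: hD.
  case/andP: (hc t) => c0 cm.
  apply: (le_trans (y := c t * - (m ^+ n * K))); last by rewrite ler_wpM2l.
  rewrite exprS -mulrA mulrN lerN2 ler_wpM2r // mulr_ge0 ?exprn_ge0 //.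
  by case/andP: hm.
move=> t; rewrite leNgt; apply/negP => Dt.
have hD0 : 0 < - D t by rewrite oppr_gt0.
have [n hn] := @small_pow _ m K (- D t) hm K0 hD0.
by have := Hn n t; rewrite lerNl; move/(lt_le_trans hn); rewrite ltxx.
Qed.

Lemma bq_shift {R : realType} (q : nat -> R) t : (fun j => bq q t j.+1) = bq q t.+1.
Proof. by apply: funext => j; rewrite /bq addnS addSn. Qed.

Lemma Sq_rec {R : realType} (a : R) q t : 0 <= a < 1 -> decision_rule q ->
  Sser a (bq q t) = (1 - q t) * (1 + a * Sser a (bq q t.+1)).
Proof.
move=> ha hq; rewrite (@Sser_rec _ a _ ha (bq_unit q t hq)) bq_shift.
by rewrite /bq addn0.
Qed.

Lemma core {R : realType} (q : nat -> R) (a1 a2 g : R) : decision_rule q ->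
  0 <= a1 < 1 -> 0 <= a2 < 1 -> 0 <= g <= 1 ->
  (forall t, Sser a1 (bq q t) * (1 - a1 * g) - g < 0) ->
  (forall t, 0 < Sser a2 (bq q t) * (1 - a2 * g) - g) -> False.
Proof.
move=> hq ha1 ha2 hg HA HB.
set A := fun t => Sser a1 (bq q t) * (1 - a1 * g) - g.
set B := fun t => Sser a2 (bq q t) * (1 - a2 * g) - g.
set D := fun t => A t - B t.
have recA : forall t, A t = (1 - q t - g) + a1 * (1 - q t) * A t.+1.
  by move=> t; rewrite /A (@Sq_rec _ a1 q t ha1 hq); ring.
have recB : forall t, B t = (1 - q t - g) + a2 * (1 - q t) * B t.+1.
  by move=> t; rewrite /B (@Sq_rec _ a2 q t ha2 hq); ring.
have hb : forall t, 0 <= 1 - q t <= 1.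
  by move=> t; have := bq_unit q 0 hq t; rewrite /bq add0n.
case/andP: (ha1) => a10 a11; case/andP: (ha2) => a20 a21; case/andP: hg => g0 g1.
have hK : forall t, - (1 + (1 - a2)^-1) <= D t.
  move=> t; rewrite /D /A /B opprD.
  case/andP: (@Sser_bounds _ a1 _ ha1 (bq_unit q t hq)) => S10 S11.
  case/andP: (@Sser_bounds _ a2 _ ha2 (bq_unit q t hq)) => S20 S21.
  have e1 : 0 <= 1 - a1 * g by rewrite subr_ge0 -[1]mulr1 ler_pM // ltW.
  have e2 : 0 <= 1 - a2 * g by rewrite subr_ge0 -[1]mulr1 ler_pM // ltW.
  have e3 : 1 - a2 * g <= 1 by rewrite lerBlDr lerDl mulr_ge0.
  have f1 : 0 <= Sser a1 (bq q t) * (1 - a1 * g) by rewrite mulr_ge0.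
  have f2 : Sser a2 (bq q t) * (1 - a2 * g) <= (1 - a2)^-1.
    apply: (le_trans (y := Sser a2 (bq q t))) => //.
    by rewrite -[leRHS]mulr1 ler_wpM2l.
  lra.
have K0 : 0 <= 1 + (1 - a2)^-1 by rewrite addr_ge0 // invr_ge0 subr_ge0 ltW.
have D0 : 0 <= D 0%N.
  case: (leP a2 a1) => h12.
    apply: (@iter_lb _ D (fun t => a1 * (1 - q t)) a1 _ ha1 K0) => // t.
      case/andP: (hb t) => b0 b1; rewrite mulr_ge0 //= -[leRHS]mulr1 ler_wpM2l //.
    have E : D t - a1 * (1 - q t) * D t.+1 = (1 - q t) * (a1 - a2) * B t.+1.
      by rewrite /D recA recB; ring.
    rewrite -subr_ge0 E; apply: mulr_ge0; last exact: ltW (HB _).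
    by case/andP: (hb t) => b0 _; rewrite mulr_ge0 // subr_ge0.
  apply: (@iter_lb _ D (fun t => a2 * (1 - q t)) a2 _ ha2 K0) => // t.
    case/andP: (hb t) => b0 b1; rewrite mulr_ge0 //= -[leRHS]mulr1 ler_wpM2l //.
  have E : D t - a2 * (1 - q t) * D t.+1 = (1 - q t) * (a2 - a1) * (- A t.+1).
    by rewrite /D recA recB; ring.
  rewrite -subr_ge0 E; apply: mulr_ge0; last by rewrite oppr_ge0 ltW // HA.
  by case/andP: (hb t) => b0 _; rewrite mulr_ge0 // subr_ge0 ltW.
have := HA 0%N; have := HB 0%N; rewrite /D /A /B in D0; lra.
Qed.

Definition Vf {R : realType} (d x0 : R) (F : env R) : R :=
  x0 + Num.max 0 (kapof d x0 F / (1 - Aof d F)).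
Definition Ucf {R : realType} (d x0 : R) (p : nat -> R) (F : env R) (t : nat) : R :=
  x0 + kapof d x0 F * Sser (Aof d F) (bq p t).

Lemma Bnn {R : realType} (d x0 : R) (F : env R) : 0 <= d < 1 -> 0 <= F.2 <= 1 -> 0 < x0 ->
  0 <= d * sp F * Mof x0 F.
Proof.
move=> /andP[d0 _] /sp_bounds /andP[s0 _] hx.
by rewrite !mulr_ge0 // /Mof (le_trans (ltW hx)) // le_max lexx.
Qed.

Lemma Vf_ge {R : realType} (d x0 : R) (F : env R) : 0 <= d < 1 -> 0 <= F.2 <= 1 ->
  x0 <= Vf d x0 F /\ kapof d x0 F <= (Vf d x0 F - x0) * (1 - Aof d F).
Proof.
move=> hd hF; case/andP: (@Aof_bounds _ d F hd hF) => A0 A1.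
have hA : 0 < 1 - Aof d F by rewrite subr_gt0.
split; first by rewrite /Vf lerDl le_max lexx.
rewrite /Vf addrAC subrr add0r -ler_pdivrMr //.
by rewrite le_max lexx orbT.
Qed.

Lemma Ucf_bounds {R : realType} (d x0 : R) p (F : env R) t :
  0 <= d < 1 -> 0 <= F.2 <= 1 -> decision_rule p -> 0 < x0 ->
  0 <= Ucf d x0 p F t <= Vf d x0 F.
Proof.
move=> hd hF hp hx.
have hA := @Aof_bounds _ d F hd hF; case/andP: (hA) => A0 A1.
have hA1 : 0 < 1 - Aof d F by rewrite subr_gt0.
case/andP: (@Sser_bounds _ (Aof d F) _ hA (bq_unit p t hp)) => S0 S1.
set S := Sser (Aof d F) (bq p t) in S0 S1 *.
set k := kapof d x0 F.
rewrite /Ucf /Vf -/S -/k; apply/andP; split.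
  have [k0|k0] := leP 0 k; first by apply: addr_ge0; [exact: ltW | exact: mulr_ge0].
  have h1 : k / (1 - Aof d F) <= k * S by rewrite ler_wnM2l // ltW.
  have h2 : x0 + k / (1 - Aof d F) = d * sp F * Mof x0 F / (1 - Aof d F).
    rewrite /k /kapof; field; by rewrite gt_eqF.
  have h3 : 0 <= x0 + k / (1 - Aof d F).
    by rewrite h2; apply: divr_ge0; [exact: (@Bnn _ d x0 F hd hF hx) | exact: ltW].
  apply: (le_trans h3); by rewrite lerD2l.
rewrite lerD2l.
have [k0|k0] := leP 0 k.
  by rewrite le_max; apply/orP; right; rewrite ler_wpM2l.
by rewrite le_max; apply/orP; left; rewrite nmulr_rle0.
Qed.

Lemma Ucf_const {R : realType} (d x0 c : R) (F : env R) t :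
  0 <= d < 1 -> 0 <= F.2 <= 1 -> 0 <= c <= 1 ->
  Ucf d x0 (fun _ => c) F t = x0 + kapof d x0 F * ((1 - c) / (1 - Aof d F * (1 - c))).
Proof.
move=> hd hF hc; rewrite /Ucf; congr (_ + _ * _).
have -> : bq (fun _ => c) t = (fun _ => 1 - c) by [].
apply: Sser_const; first exact: Aof_bounds.
by case/andP: hc => c0 c1; rewrite subr_ge0 c1 lerBlDr lerDl c0.
Qed.

Lemma Vf_attained {R : realType} (d x0 : R) (F : env R) t :
  0 <= d < 1 -> 0 <= F.2 <= 1 ->
  exists p, decision_rule p /\ Ucf d x0 p F t = Vf d x0 F.
Proof.
move=> hd hF; have hA := @Aof_bounds _ d F hd hF; case/andP: (hA) => A0 A1.
have hA1 : 0 < 1 - Aof d F by rewrite subr_gt0.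
have [k0|k0] := leP 0 (kapof d x0 F).
  exists (fun _ => 0); split; first by move=> _; rewrite lexx ler01.
  rewrite Ucf_const ?lexx ?ler01 // subr0 mulr1 div1r /Vf; congr (_ + _).
  rewrite max_r //; apply: divr_ge0 => //; exact: ltW.
exists (fun _ => 1); split; first by move=> _; rewrite lexx ler01.
rewrite Ucf_const ?lexx ?ler01 // subrr mul0r mulr0 /Vf max_l ?addr0 //.
by rewrite ltW // pmulr_llt0 ?invr_gt0.
Qed.

Lemma alt_prob_ge0 {R : realType} (F : env R) x : 0 <= F.2 <= 1 -> 0 <= alt_prob F x.
Proof.
case/andP=> s0 s1; rewrite /alt_prob; apply: addr_ge0.
  by case: ifP.
by case: ifP => // _; rewrite subr_ge0.
Qed.

Lemma hist_prob_ge0 {R : realType} (F : env R) xs : 0 <= F.2 <= 1 -> 0 <= hist_prob F xs.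
Proof. by move=> hF; rewrite /hist_prob; apply: prodr_ge0 => x _; exact: alt_prob_ge0. Qed.

Arguments Uenv_zero {R d q F x0 xs}.
Arguments Ucf_bounds {R d x0 p F} t.

Lemma Uprior_nz {R : realType} (d : R) p mu x0 xs : ~~ all (fun x => x == 0) xs ->
  0 < post_norm mu xs -> U_prior d p mu x0 xs = hmax x0 xs.
Proof.
move=> hnz hN; rewrite /U_prior /U_env (negbTE hnz).
rewrite -mulr_suml -/(post_norm mu xs) mulrC mulKf //; by rewrite gt_eqF.
Qed.

Lemma hmax_ge {R : realType} (x0 : R) xs : x0 <= hmax x0 xs.
Proof.
elim: xs => [|x xs IH]; first by rewrite /hmax big_nil.
by rewrite /hmax big_cons le_max -/(hmax x0 xs) IH orbT.
Qed.

Lemma Vprior_nz {R : realType} (d : R) mu x0 xs : ~~ all (fun x => x == 0) xs ->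
  0 < post_norm mu xs -> V_prior d mu x0 xs = hmax x0 xs.
Proof.
move=> hnz hN; rewrite /V_prior.
have -> : [set U_prior d q mu x0 xs | q in @decision_rule R] = [set hmax x0 xs].
  apply/seteqP; split=> y.
    by case=> q _ <-; rewrite Uprior_nz.
  move=> ->; exists (fun _ => 0); first by move=> _; rewrite lexx ler01.
  by rewrite Uprior_nz.
exact: sup1.
Qed.

Lemma Uprior_zero {R : realType} (d : R) p X mu x0 xs :
  0 <= d < 1 -> decision_rule p -> 0 < x0 -> prior X mu -> all (fun x => x == 0) xs ->
  U_prior d p mu x0 xs =
  (\sum_(e <- mu) e.2 * hist_prob e.1 xs * Ucf d x0 p e.1 (size xs)) / post_norm mu xs.
Proof.
move=> hd hp hx [hmu _] hall; rewrite /U_prior; congr (_ / _).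
rewrite big_seq [RHS]big_seq; apply: eq_bigr => e he.
have [[_ hF] _] := hmu e he.
by rewrite (Uenv_zero hd hF hp hx hall).
Qed.

Arguments Uprior_zero {R d p X mu x0 xs}.

Lemma Vprior_zero {R : realType} (d : R) X mu x0 xs :
  0 <= d < 1 -> 0 < x0 -> prior X mu -> all (fun x => x == 0) xs -> 0 < post_norm mu xs ->
  x0 <= V_prior d mu x0 xs /\
  V_prior d mu x0 xs <= (\sum_(e <- mu) e.2 * hist_prob e.1 xs * Vf d x0 e.1) / post_norm mu xs.
Proof.
move=> hd hx hpr hall hN.
have [hmu _] := hpr.
set M := (\sum_(e <- mu) e.2 * hist_prob e.1 xs * Vf d x0 e.1) / post_norm mu xs.
have ub : ubound [set U_prior d q mu x0 xs | q in @decision_rule R] M.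
  move=> _ [q hq <-]; rewrite (Uprior_zero hd hq hx hpr hall) /M.
  apply: ler_wpM2r; first by rewrite invr_ge0 ltW.
  rewrite big_seq [leRHS]big_seq; apply: ler_sum => e he.
  have [[_ hF] he2] := hmu e he.
  apply: ler_wpM2l; first by rewrite mulr_ge0 // hist_prob_ge0.
  by case/andP: (Ucf_bounds (size xs) hd hF hq hx).
have r1 : decision_rule (fun _ : nat => (1 : R)) by move=> _; rewrite ler01 lexx.
split; last first.
  apply: ge_sup => //; exists (U_prior d (fun _ => 1) mu x0 xs); exists (fun _ => 1) => //.
have E : x0 = U_prior d (fun _ => 1) mu x0 xs.
  rewrite (Uprior_zero hd r1 hx hpr hall).
  rewrite big_seq (eq_bigr (fun e => e.2 * hist_prob e.1 xs * x0)); last first.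
    move=> e he; have [[_ hF] _] := hmu e he.
    by rewrite Ucf_const ?ler01 ?lexx // subrr mul0r mulr0 addr0.
  by rewrite -big_seq -mulr_suml -/(post_norm mu xs) mulrC mulKf // gt_eqF.
rewrite {1}E; have hs : has_ubound [set U_prior d q mu x0 xs | q in @decision_rule R] by exists M.
by apply: (ub_le_sup hs); exists (fun _ => 1).
Qed.

Arguments Vprior_zero {R d X mu x0 xs}.

Lemma ratio_ge0 {R : realType} (d : R) X x0 p mu xs :
  0 <= d < 1 -> 0 < x0 -> decision_rule p -> prior X mu -> prior_consistent mu xs ->
  0 <= U_prior d p mu x0 xs / V_prior d mu x0 xs.
Proof.
move=> hd hx hp hpr hN; rewrite /prior_consistent in hN.
have [hall|hnz] := boolP (all (fun x => x == 0) xs); last first.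
  rewrite Uprior_nz // Vprior_nz //; apply: divr_ge0; apply: le_trans (hmax_ge _ _); exact: ltW.
have [hV _] := Vprior_zero hd hx hpr hall hN.
apply: divr_ge0; last exact: le_trans (ltW hx) hV.
rewrite (Uprior_zero hd hp hx hpr hall); apply: divr_ge0; last exact: ltW.
rewrite big_seq; apply: sumr_ge0 => e he; have [hmu _] := hpr.
have [[_ hF] he2] := hmu e he.
rewrite !mulr_ge0 ?hist_prob_ge0 //.
by case/andP: (Ucf_bounds (size xs) hd hF hp hx).
Qed.

Arguments ratio_ge0 {R d X x0 p mu xs}.

Definition rset {R : realType} (d : R) X x0 (q : nat -> R) :=
  [set r : R | exists (mu : seq (env R * R)) (xs : seq R),
          [/\ prior X mu, prior_consistent mu xs &
               r = U_prior d q mu x0 xs / V_prior d mu x0 xs]].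

Lemma rset_ne {R : realType} (d : R) (X : set R) x0 q : X 0 -> rset d X x0 q !=set0.
Proof.
move=> hX0; exists (U_prior d q [:: ((0, 0), 1)] x0 [::] / V_prior d [:: ((0, 0), 1)] x0 [::]).
exists [:: ((0, 0), 1)], [::]; split => //.
  split; last by rewrite big_seq1.
  move=> e; rewrite mem_seq1 => /eqP -> /=; split; last exact: ler01.
  by split => //=; rewrite lexx ler01.
by rewrite /prior_consistent /post_norm big_seq1 /hist_prob big_nil mulr1 ltr01.
Qed.

Lemma r_props {R : realType} (d : R) (X : set R) x0 q :
  0 <= d < 1 -> 0 < x0 -> decision_rule q -> X 0 ->
  0 <= perf_ratio d X x0 q /\
  forall mu xs, prior X mu -> prior_consistent mu xs ->
    perf_ratio d X x0 q <= U_prior d q mu x0 xs / V_prior d mu x0 xs.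
Proof.
move=> hd hx hq hX0.
have lb : lbound (rset d X x0 q) 0.
  by move=> _ [mu [xs [hpr hN ->]]]; exact: (ratio_ge0 hd hx hq hpr hN).
split.
  by apply: lb_le_inf; [exact: rset_ne | exact: lb].
move=> mu xs hpr hN; have hl : has_lbound (rset d X x0 q) by exists 0.
by apply: (ge_inf hl); exists mu, xs; split.
Qed.

Arguments r_props {R d X x0 q}.

Lemma alt_prob0 {R : realType} (F : env R) : alt_prob F 0 = 1 - sp F.
Proof.
rewrite /alt_prob /sp eqxx eq_sym; case: ifP => _; last by rewrite add0r.
by rewrite subr0 addrC subrK.
Qed.

Lemma hist_nseq {R : realType} (F : env R) t : hist_prob F (nseq t 0) = (1 - sp F) ^+ t.
Proof.
elim: t => [|t IH]; first by rewrite /hist_prob big_nil expr0.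
by rewrite /hist_prob /= big_cons -/(hist_prob F (nseq t 0)) IH alt_prob0 exprS.
Qed.

Lemma all_nseq0 {R : realType} t : all (fun x : R => x == 0) (nseq t 0).
Proof. by elim: t => //= t ->; rewrite eqxx. Qed.

Lemma single_prior {R : realType} (X : set R) (F : env R) : X F.1 -> 0 <= F.2 <= 1 ->
  prior X [:: (F, 1)].
Proof.
move=> hX hF; split; last by rewrite big_seq1.
by move=> e; rewrite mem_seq1 => /eqP -> /=; split; [split | exact: ler01].
Qed.

Arguments single_prior {R X F}.

Lemma Usingle {R : realType} (d : R) (X : set R) p (F : env R) x0 xs :
  0 <= d < 1 -> decision_rule p -> 0 < x0 -> X F.1 -> 0 <= F.2 <= 1 ->
  all (fun x => x == 0) xs -> 0 < hist_prob F xs ->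
  U_prior d p [:: (F, 1)] x0 xs = Ucf d x0 p F (size xs).
Proof.
move=> hd hp hx hX hF hall hh.
rewrite (Uprior_zero hd hp hx (single_prior hX hF) hall) /post_norm !big_seq1 /=.
by rewrite mul1r mulrC mulKf // gt_eqF.
Qed.

Arguments Usingle {R d X p F x0 xs}.

Lemma Vsingle {R : realType} (d : R) (X : set R) (F : env R) x0 xs :
  0 <= d < 1 -> 0 < x0 -> X F.1 -> 0 <= F.2 <= 1 ->
  all (fun x => x == 0) xs -> 0 < hist_prob F xs ->
  V_prior d [:: (F, 1)] x0 xs = Vf d x0 F.
Proof.
move=> hd hx hX hF hall hh.
have hpr := single_prior hX hF.
have hN : 0 < post_norm [:: (F, 1)] xs by rewrite /post_norm big_seq1 mul1r.
have [_ hV] := Vprior_zero hd hx hpr hall hN.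
move: hV; rewrite /post_norm !big_seq1 /= mul1r mulrC mulKf ?gt_eqF // => hV.
apply/le_anti; rewrite hV /=.
have [p [hp hpv]] := @Vf_attained _ d x0 F (size xs) hd hF.
rewrite -hpv -(Usingle hd hp hx hX hF hall hh).
have hs : has_ubound [set U_prior d q [:: (F, 1)] x0 xs | q in @decision_rule R].
  exists (Vf d x0 F) => _ [q hq <-]; rewrite (Usingle hd hq hx hX hF hall hh).
  by case/andP: (Ucf_bounds (size xs) hd hF hq hx).
by apply: (ub_le_sup hs); exists p.
Qed.

Arguments Vsingle {R d X F x0 xs}.

Lemma QC {R : realType} (d : R) (X : set R) x0 q F t :
  0 <= d < 1 -> 0 < x0 -> decision_rule q -> X 0 -> X F.1 -> 0 <= F.2 <= 1 -> sp F < 1 ->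
  perf_ratio d X x0 q * Vf d x0 F <= Ucf d x0 q F t.
Proof.
move=> hd hx hq hX0 hX hF hs.
have [_ hr] := r_props hd hx hq hX0.
have hh : 0 < hist_prob F (nseq t 0) by rewrite hist_nseq exprn_gt0 // subr_gt0.
have hN : 0 < post_norm [:: (F, 1)] (nseq t 0) by rewrite /post_norm big_seq1 mul1r.
have := hr _ _ (single_prior hX hF) hN.
rewrite (Usingle hd hq hx hX hF (all_nseq0 t) hh) (Vsingle hd hx hX hF (all_nseq0 t) hh).
rewrite size_nseq.
have hV : 0 < Vf d x0 F by have [h _] := @Vf_ge _ d x0 F hd hF; exact: lt_le_trans hx h.
by rewrite ler_pdivlMr.
Qed.

Definition Lf {R : realType} (d x0 r : R) (F : env R) (g : R) : R :=
  (r * Vf d x0 F - x0) * (1 - Aof d F * g) - kapof d x0 F * g.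

Lemma Ag_pos {R : realType} (d g : R) F : 0 <= d < 1 -> 0 <= F.2 <= 1 -> 0 <= g <= 1 ->
  0 < 1 - Aof d F * g.
Proof.
move=> hd hF /andP[g0 g1]; case/andP: (@Aof_bounds _ d F hd hF) => A0 A1.
rewrite subr_gt0; apply: le_lt_trans A1; rewrite -[leRHS]mulr1 ler_wpM2l //.
Qed.

Arguments Ag_pos {R d g F}.

Lemma fail_sign {R : realType} (d x0 r : R) q F g t :
  0 <= d < 1 -> 0 <= F.2 <= 1 -> 0 <= g <= 1 ->
  r * Vf d x0 F <= Ucf d x0 q F t -> 0 < Lf d x0 r F g ->
  0 < kapof d x0 F * (Sser (Aof d F) (bq q t) * (1 - Aof d F * g) - g).
Proof.
move=> hd hF hg hQ hL.
have hA := Ag_pos hd hF hg.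
set S := Sser (Aof d F) (bq q t) in hQ *.
set k := kapof d x0 F in hQ hL *.
move: hQ hL; rewrite /Ucf /Lf -/S -/k => hQ hL.
have h1 : (r * Vf d x0 F - x0) * (1 - Aof d F * g) <= k * S * (1 - Aof d F * g).
  by apply: ler_wpM2r; [exact: ltW | lra].
have -> : k * (S * (1 - Aof d F * g) - g) = k * S * (1 - Aof d F * g) - k * g by ring.
lra.
Qed.

Arguments fail_sign {R d x0 r q F g t}.

Lemma lin_up {R : realType} (P M g : R) : 0 <= g < 1 -> 0 < P - g * M ->
  exists g', g < g' <= 1 /\ 0 < P - g' * M.
Proof.
move=> /andP[g0 g1] hL.
have [M0|M0] := leP M 0.
  exists 1; rewrite g1 lexx; split => //.
  have : 0 <= (1 - g) * - M by apply: mulr_ge0; [rewrite subr_ge0 ltW | rewrite oppr_ge0].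
  lra.
set L := P - g * M in hL *.
have hLM : 0 < L + M by rewrite addr_gt0.
set u := L / (L + M).
have hu : u * (L + M) = L by rewrite /u mulfVK // gt_eqF.
have u0 : 0 < u by rewrite /u divr_gt0.
have u1 : u < 1 by rewrite /u ltr_pdivrMr // mul1r ltrDl.
exists (g + (1 - g) * u); split.
  apply/andP; split.
    by rewrite ltrDl mulr_gt0 // subr_gt0.
  have : 0 <= (1 - g) * (1 - u) by rewrite mulr_ge0 // subr_ge0 ltW.
  lra.
have hm : u * M = L * (1 - u) by move: hu; rewrite mulrDr; lra.
have -> : P - (g + (1 - g) * u) * M = L - (1 - g) * (u * M) by rewrite /L; ring.
rewrite hm.
have : (1 - g) * (L * (1 - u)) < L.
  rewrite mulrCA -[ltRHS]mulr1 ltr_pM2l //.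
  have hg1 : 0 <= 1 - g by rewrite subr_ge0 ltW.
  have : (1 - g) * u >= 0 by rewrite mulr_ge0 // ltW.
  have : g * (1 - u) >= 0 by rewrite mulr_ge0 // subr_ge0 ltW.
  have : g * u >= 0 by rewrite mulr_ge0 // ltW.
  nra.
lra.
Qed.

Lemma lin_down {R : realType} (P M g : R) : 0 < g <= 1 -> 0 < P - g * M ->
  exists g', 0 <= g' < g /\ 0 < P - g' * M.
Proof.
move=> /andP[g0 g1] hL.
have h1 : 0 <= 1 - g < 1 by rewrite subr_ge0 g1 /= ltrBlDr ltrDl.
have h2 : 0 < (P - M) - (1 - g) * (- M) by lra.
have [g'' [/andP [lo hi] hpos]] := @lin_up _ _ _ _ h1 h2.
exists (1 - g''); split.
  by apply/andP; split; [rewrite subr_ge0 | rewrite ltrBlDr -ltrBlDl].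
lra.
Qed.

Definition FP {R : realType} (d : R) (X : set R) (x0 r : R) : set R :=
  [set g | 0 <= g <= 1 /\ exists F : env R, [/\ X F.1, 0 <= F.2 <= 1, sp F < 1,
     0 < kapof d x0 F & 0 < Lf d x0 r F g]].

Definition gstar {R : realType} (d : R) (X : set R) (x0 r : R) : R :=
  sup (FP d X x0 r `|` [set 0]).

Lemma gstar_sup {R : realType} (d : R) X x0 r : has_sup (FP d X x0 r `|` [set 0]).
Proof.
split; first by exists 0; right.
by exists 1 => g [[/andP [_ h] _]|->] //; exact: ler01.
Qed.

Lemma gstar_bounds {R : realType} (d : R) X x0 r : 0 <= gstar d X x0 r <= 1.
Proof.
apply/andP; split.
  by apply: (ub_le_sup (gstar_sup d X x0 r).2); right.
apply: ge_sup; first by exists 0; right.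
by move=> g [[/andP [_ h] _]|->] //; exact: ler01.
Qed.

Lemma Lf_lin {R : realType} (d x0 r : R) F g :
  Lf d x0 r F g = (r * Vf d x0 F - x0) - g * (Aof d F * (r * Vf d x0 F - x0) + kapof d x0 F).
Proof. by rewrite /Lf; ring. Qed.

Section Pass.
End Pass.

Lemma Kfail {R : realType} (d x0 r : R) (X : set R) q :
  0 <= d < 1 -> decision_rule q ->
  (forall F : env R, X F.1 -> 0 <= F.2 <= 1 -> sp F < 1 -> forall t,
      r * Vf d x0 F <= Ucf d x0 q F t) ->
  forall (F1 F2 : env R) g1 g2,
  X F1.1 -> 0 <= F1.2 <= 1 -> sp F1 < 1 -> kapof d x0 F1 < 0 -> 0 <= g1 <= 1 -> 0 < Lf d x0 r F1 g1 ->
  X F2.1 -> 0 <= F2.2 <= 1 -> sp F2 < 1 -> 0 < kapof d x0 F2 -> 0 <= g2 <= 1 -> 0 < Lf d x0 r F2 g2 ->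
  g2 < g1.
Proof.
move=> hd hq hQC F1 F2 g1 g2 hX1 hF1 hs1 k1 hg1 hL1 hX2 hF2 hs2 k2 hg2 hL2.
rewrite ltNge; apply/negP => h12.
have hA1 := @Aof_bounds _ d F1 hd hF1; have hA2 := @Aof_bounds _ d F2 hd hF2.
apply: (@core _ q (Aof d F1) (Aof d F2) g1 hq hA1 hA2 hg1).
  move=> t; have := fail_sign hd hF1 hg1 (hQC F1 hX1 hF1 hs1 t) hL1.
  by rewrite nmulr_rgt0.
move=> t; have := fail_sign hd hF2 hg2 (hQC F2 hX2 hF2 hs2 t) hL2.
rewrite pmulr_rgt0 // => h.
case/andP: (@Sser_bounds _ (Aof d F2) _ hA2 (bq_unit q t hq)) => S0 _.
case/andP: hA2 => A0 _.
have : 0 <= Sser (Aof d F2) (bq q t) * Aof d F2 * (g2 - g1).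
  by apply: mulr_ge0; [exact: mulr_ge0 | rewrite subr_ge0].
lra.
Qed.

Lemma pass_lt1 {R : realType} (d x0 r : R) (X : set R) q :
  0 <= d < 1 -> 0 < x0 -> decision_rule q ->
  (forall F : env R, X F.1 -> 0 <= F.2 <= 1 -> sp F < 1 -> forall t,
      r * Vf d x0 F <= Ucf d x0 q F t) ->
  forall F : env R, X F.1 -> 0 <= F.2 <= 1 -> sp F < 1 ->
  Lf d x0 r F (gstar d X x0 r) <= 0.
Proof.
move=> hd hx hq hQC F hX hF hs.
set gs := gstar d X x0 r.
have hgs : 0 <= gs <= 1 := gstar_bounds d X x0 r.
have hA := @Aof_bounds _ d F hd hF; case/andP: (hA) => A0 A1.
case/andP: (@Sser_bounds _ (Aof d F) _ hA (bq_unit q 0 hq)) => S0 S1.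
rewrite leNgt; apply/negP => hL.
have hfs := fail_sign hd hF hgs (hQC F hX hF hs 0%N) hL.
have [k0|k0] := ltP 0 (kapof d x0 F).
  move: hfs; rewrite pmulr_rgt0 // => hfs.
  case/andP: (hgs) => g0 g1.
  have [glt1|gge1] := ltP gs 1.
    have hgs' : 0 <= gs < 1 by rewrite g0 glt1.
    move: hL; rewrite Lf_lin => hL.
    have [g' [/andP [gl gu] hpos]] := @lin_up _ _ _ _ hgs' hL.
    have : g' <= gs.
      apply: (ub_le_sup (gstar_sup d X x0 r).2); left; split.
        by rewrite gu andbT (le_trans g0) // ltW.
      exists F; split => //; rewrite Lf_lin //.
    by rewrite leNgt gl.
  have e1 : gs = 1 by apply/le_anti; rewrite g1 gge1.
  move: hfs; rewrite e1 mulr1.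
  have hA1 : 0 < 1 - Aof d F by rewrite subr_gt0.
  have : Sser (Aof d F) (bq q 0) * (1 - Aof d F) <= 1 by rewrite -ler_pdivlMr // div1r.
  lra.
have [k0'|k0'] := ltP (kapof d x0 F) 0; last first.
  have ek : kapof d x0 F = 0 by apply/le_anti; rewrite k0 k0'.
  by move: hfs; rewrite ek mul0r ltxx.
move: hfs; rewrite nmulr_rgt0 // => hfs.
case/andP: (hgs) => g0 g1.
have [gpos|gle0] := ltP 0 gs; last first.
  have e0 : gs = 0 by apply/le_anti; rewrite gle0 g0.
  move: hfs; rewrite e0 mulr0 !subr0 mulr1 => hfs.
  by move: (lt_le_trans hfs S0); rewrite ltxx.
have hgs' : 0 < gs <= 1 by rewrite gpos g1.
move: hL; rewrite Lf_lin => hL.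
have [g'' [/andP [gl gu] hpos]] := @lin_down _ _ _ _ hgs' hL.
have [e He ge] := sup_gt (S := FP d X x0 r `|` [set 0]) (ex_intro _ 0 (or_intror erefl)) gu.
case: He => [[hge [F2 [hX2 hF2 hs2 k2 hL2]]]|e0]; last first.
  by move: ge; rewrite e0 ltNge gl.
have hg'' : 0 <= g'' <= 1 by rewrite gl (le_trans (ltW gu)).
have := @Kfail _ d x0 r X q hd hq hQC F F2 g'' e hX hF hs k0' hg'' _ hX2 hF2 hs2 k2 hge hL2.
rewrite Lf_lin => /(_ hpos) h.
by move: (lt_trans h ge); rewrite ltxx.
Qed.

Lemma one_limit {R : realType} (phi : R -> R) :
  (fun n : nat => phi (1 - (n.+1%:R)^-1)) @ \oo --> phi 1 ->
  (forall n : nat, phi (1 - (n.+1%:R)^-1) <= 0) -> phi 1 <= 0.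
Proof.
move=> H hn; rewrite -(cvg_lim _ H) //.
by apply: limr_le; [exact: (cvgP _ H) | exact: nearW].
Qed.

Lemma sig_cvg {R : realType} : (fun n : nat => 1 - (n.+1%:R)^-1 : R) @ \oo --> (1 : R).
Proof.
have H := cvgB (cvg_cst (1 : R)) (@cvg_harmonic R); rewrite subr0 in H.
exact: H.
Qed.

Lemma sig_bounds (R : realType) (n : nat) : (0 : R) <= 1 - ((n.+1)%:R : R)^-1 < 1.
Proof.
apply/andP; split.
  by rewrite subr_ge0 invf_le1 // ?ler1n // ltr0n.
by rewrite ltrBlDr ltrDl invr_gt0 ltr0n.
Qed.

Lemma quad_cvg {R : realType} (phi : R -> R) :
  (forall s, phi s = phi 0 + ((phi 1 - phi (-1)) / 2) * s + ((phi 1 + phi (-1)) / 2 - phi 0) * (s * s)) ->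
  (fun n : nat => phi (1 - (n.+1%:R)^-1)) @ \oo --> phi 1.
Proof.
move=> E.
have Hs := @sig_cvg R.
set a := phi 0; set b := (phi 1 - phi (-1)) / 2; set c := (phi 1 + phi (-1)) / 2 - phi 0.
have -> : phi 1 = a + b * 1 + c * (1 * 1) by rewrite -E.
have -> : (fun n : nat => phi (1 - (n.+1%:R)^-1)) =
   (fun n : nat => a + b * (1 - (n.+1%:R)^-1) + c * ((1 - (n.+1%:R)^-1) * (1 - (n.+1%:R)^-1))).
  by apply: funext => n; rewrite -E.
apply: cvgD; first (apply: cvgD; [exact: cvg_cst | apply: cvgM; [exact: cvg_cst | exact: Hs]]).
apply: cvgM; first exact: cvg_cst.
by apply: cvgM; exact: Hs.
Qed.

Lemma pass_one {R : realType} (d x0 r g : R) (X : set R) (F : env R) :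
  0 <= d < 1 -> 0 < x0 -> 0 <= r -> 0 <= g <= 1 ->
  X F.1 -> F.1 != 0 -> F.2 = 1 ->
  (forall s : R, 0 <= s < 1 -> Lf d x0 r (F.1, s) g <= 0) ->
  Lf d x0 r F g <= 0.
Proof.
move=> hd hx hr hg hX hz h2 hall.
case/andP: (hd) => d0 d1; case/andP: (hg) => g0 g1.
set M := Num.max x0 F.1.
pose phi1 := fun s : R => (r * x0 - x0) * (1 - d * (1 - s) * g) - (d * (1 - s) * x0 + d * s * M - x0) * g.
pose phi2 := fun s : R => (r * ((1 - d * (1 - s)) * x0 + (d * (1 - s) * x0 + d * s * M - x0)) - (1 - d * (1 - s)) * x0)
   * (1 - d * (1 - s) * g) - (1 - d * (1 - s)) * (d * (1 - s) * x0 + d * s * M - x0) * g.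
have Hs := @sig_cvg R.
have H1 : (fun n : nat => phi1 (1 - (n.+1%:R)^-1)) @ \oo --> phi1 1.
  apply: quad_cvg => s; rewrite /phi1; by field.
have H2 : (fun n : nat => phi2 (1 - (n.+1%:R)^-1)) @ \oo --> phi2 1.
  apply: quad_cvg => s; rewrite /phi2; by field.
have hboth : forall n : nat, phi1 (1 - (n.+1%:R)^-1) <= 0 /\ phi2 (1 - (n.+1%:R)^-1) <= 0.
  move=> n; set s := 1 - (n.+1%:R)^-1.
  have hs : 0 <= s < 1 := sig_bounds R n.
  have hFs : 0 <= (F.1, s).2 <= 1 by case/andP: hs => s0 s1; rewrite /= s0 ltW.
  have hL := hall s hs.
  have [hV1 hV2] := @Vf_ge _ d x0 (F.1, s) hd hFs.
  have hAg := @Ag_pos _ d g (F.1, s) hd hFs hg.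
  have hA := @Aof_bounds _ d (F.1, s) hd hFs.
  have espec : sp (F.1, s) = s by rewrite /sp /= (negbTE hz).
  have eA : Aof d (F.1, s) = d * (1 - s) by rewrite /Aof espec.
  have ek : kapof d x0 (F.1, s) = d * (1 - s) * x0 + d * s * M - x0.
    by rewrite /kapof eA espec /Mof.
  move: hL hV2 hAg hA; rewrite /Lf eA ek => hL hV2 hAg hA.
  set V := Vf d x0 (F.1, s) in hV1 hV2 hL.
  set k := d * (1 - s) * x0 + d * s * M - x0 in hV2 hL *.
  set A := d * (1 - s) in hV2 hL hAg hA *.
  case/andP: hA => A0 A1.
  have p1 : 0 <= r * (V - x0) * (1 - A * g).
    by apply: mulr_ge0; [apply: mulr_ge0 => //; rewrite subr_ge0 | exact: ltW].
  have p2 : 0 <= r * ((V - x0) * (1 - A) - k) * (1 - A * g).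
    by apply: mulr_ge0; [apply: mulr_ge0 => //; rewrite subr_ge0 | exact: ltW].
  have p3 : 0 <= (1 - A) * - ((r * V - x0) * (1 - A * g) - k * g).
    by apply: mulr_ge0; [rewrite subr_ge0 ltW | rewrite oppr_ge0].
  rewrite /phi1 /phi2 -/A -/k; split; lra.
have P1 := @one_limit _ phi1 H1 (fun n => (hboth n).1).
have P2 := @one_limit _ phi2 H2 (fun n => (hboth n).2).
have espec : sp F = 1 by rewrite /sp (negbTE hz) h2.
have eA : Aof d F = 0 by rewrite /Aof espec subrr mulr0.
have ek : kapof d x0 F = d * M - x0 by rewrite /kapof eA espec /Mof mul0r add0r mulr1.
move: P1 P2; rewrite /phi1 /phi2 /Lf /Vf eA ek subrr !mulr0 !mul0r !subr0 !mulr1 !add0r => P1 P2.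
have [k0|k0] := leP 0 (d * M - x0).
  rewrite invr1 mulr1 max_r //; move: P2; rewrite !mul1r => P2.
  exact: P2.
rewrite invr1 mulr1 max_l; last exact: ltW.
by rewrite addr0.
Qed.

Lemma pass_U {R : realType} (d x0 r g : R) (F : env R) :
  0 <= d < 1 -> 0 <= F.2 <= 1 -> 0 <= g <= 1 -> Lf d x0 r F g <= 0 ->
  r * Vf d x0 F <= x0 + kapof d x0 F * (g / (1 - Aof d F * g)).
Proof.
move=> hd hF hg hL.
have hA := @Ag_pos _ d g F hd hF hg.
rewrite -lerBlDl mulrA ler_pdivlMr //.
by move: hL; rewrite /Lf subr_le0.
Qed.

Lemma pass_all {R : realType} (d x0 : R) (X : set R) q :
  0 <= d < 1 -> 0 < x0 -> decision_rule q -> X 0 ->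
  forall F : env R, X F.1 -> 0 <= F.2 <= 1 ->
  Lf d x0 (perf_ratio d X x0 q) F (gstar d X x0 (perf_ratio d X x0 q)) <= 0.
Proof.
move=> hd hx hq hX0.
set r := perf_ratio d X x0 q.
have [hr0 _] := r_props hd hx hq hX0.
have hQC : forall F : env R, X F.1 -> 0 <= F.2 <= 1 -> sp F < 1 -> forall t,
      r * Vf d x0 F <= Ucf d x0 q F t.
  by move=> F hX hF hs t; exact: (@QC _ d X x0 q F t hd hx hq hX0 hX hF hs).
move=> F hX hF.
have [hs|hs] := ltP (sp F) 1; first exact: (@pass_lt1 _ d x0 r X q hd hx hq hQC F hX hF hs).
have hz : F.1 != 0.
  by apply/negP => /eqP h; move: hs; rewrite /sp h eqxx ler10.
have h2 : F.2 = 1.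
  by apply/le_anti; case/andP: hF => _ ->; move: hs; rewrite /sp (negbTE hz).
apply: (@pass_one _ d x0 r _ X F hd hx hr0 (gstar_bounds d X x0 r) hX hz h2).
move=> s hs'.
have hFs : 0 <= (F.1, s).2 <= 1 by case/andP: hs' => s0 s1; rewrite /= s0 ltW.
apply: (@pass_lt1 _ d x0 r X q hd hx hq hQC (F.1, s) hX hFs).
by rewrite /sp /= (negbTE hz); case/andP: hs'.
Qed.

Theorem proposition4 (R : realType) (delta : R) (X : set R) (x0 : R)
  (hdelta : 0 < delta < 1)
  (hXpos : X `<=` [set x : R | 0 <= x])
  (hXmeas : measurable X)
  (hX0 : X 0)
  (hx0 : 0 < x0)
  (q : nat -> R) (hq : decision_rule q) :
  exists qbar : nat -> R,
    [/\ decision_rule qbar, stationary qbar &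
        perf_ratio delta X x0 q <= perf_ratio delta X x0 qbar].
Proof.
have hd : 0 <= delta < 1 by case/andP: hdelta => h0 h1; rewrite ltW.
set r := perf_ratio delta X x0 q.
have [hr0 hr] := r_props hd hx0 hq hX0.
set gs := gstar delta X x0 r.
have hgs : 0 <= gs <= 1 := gstar_bounds delta X x0 r.
have hpass := @pass_all _ delta x0 X q hd hx0 hq hX0.
have hqb : decision_rule (fun _ : nat => 1 - gs).
  by move=> _; case/andP: hgs => g0 g1; rewrite subr_ge0 g1 lerBlDr lerDl g0.
exists (fun _ => 1 - gs); split => //.
apply: lb_le_inf; first exact: rset_ne.
move=> _ [mu [xs [hpr hN ->]]].
have [hall|hnz] := boolP (all (fun x => x == 0) xs); last first.
  have := hr mu xs hpr hN.
  by rewrite !Uprior_nz // !Vprior_nz.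
have [hV1 hV2] := Vprior_zero hd hx0 hpr hall hN.
have hVpos : 0 < V_prior delta mu x0 xs by exact: lt_le_trans hx0 hV1.
rewrite ler_pdivlMr //.
apply: (le_trans (y := r * ((\sum_(e <- mu) e.2 * hist_prob e.1 xs * Vf delta x0 e.1) / post_norm mu xs))).
  by rewrite ler_wpM2l.
rewrite (Uprior_zero hd hqb hx0 hpr hall) mulrA.
apply: ler_wpM2r; first by rewrite invr_ge0 ltW.
rewrite mulr_sumr big_seq [leRHS]big_seq; apply: ler_sum => e he.
have [hmu _] := hpr; have [[hX hF] he2] := hmu e he.
rewrite mulrCA; apply: ler_wpM2l; first by rewrite mulr_ge0 // hist_prob_ge0.
rewrite (@Ucf_const _ delta x0 (1 - gs) e.1 (size xs) hd hF (hqb 0%N)).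
have -> : 1 - (1 - gs) = gs by ring.
exact: pass_U hd hF hgs (hpass e.1 hX hF).
Qed.
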